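(* Let $\mathcal A=\{G\in\mathcal G:\ \overline G\text{ is Abelian}\}$ and let $A\in\mathcal G$ be such that $\overline A\cong\bigoplus_{p\in\mathbf P}\mathbb Z[p^\infty]^{(\mathbb N)}$. Then the isomorphism class $\{G\in\mathcal G:\ \overline G\cong\overline A\}$ is dense in $\mathcal A$.
   Context: Let $\mathbb N=\{1,2,3,\dots\}$. Equip $\mathbb N^{\mathbb N\times\mathbb N}$ with the product topology of the discrete topology on $\mathbb N$. Let $\mathcal G$ be the subspace consisting of those $A\in\mathbb N^{\mathbb N\times\mathbb N}$ that are the multiplication table of a group on the underlying set $\mathbb N$ whose identity element is $1$. For $G\in\mathcal G$, $\overline G$ denotes the group on $\mathbb N$ with multiplication table $G$. $\mathbf P$ is the set of primes, $\mathbb Z[p^\infty]$ is the Prüfer $p$-group, and $K^{(\mathbb N)}$ is the direct sum of countably infinitely many copies of $K$. $\mathcal A$ carries the subspace topology. *)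

(* Defs.v *)
(* the index set N = {1,2,...}
   is Stdlib's [positive], identity element 1%positive. *)
From Stdlib Require Import PArith List.
From mathcomp Require Import all_boot all_order all_algebra.
Set Implicit Arguments. Unset Strict Implicit. Unset Printing Implicit Defensive.
Import Order.TTheory GRing.Theory Num.Theory.

(* A point of N^(N x N): a multiplication table. *)
Definition table := positive -> positive -> positive.

Definition is_group_table (G : table) : Prop :=
  (forall x y z, G (G x y) z = G x (G y z)) /\
  (forall x, G 1%positive x = x /\ G x 1%positive = x) /\
  (forall x, exists y, G x y = 1%positive /\ G y x = 1%positive).

Definition is_abelian_table (G : table) : Prop :=
  is_group_table G /\ forall x y, G x y = G y x.

Definition table_iso (G H : table) : Prop :=
  exists f : positive -> positive, bijective f /\
    forall x y, f (G x y) = H (f x) (f y).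

(* Z[p^oo] is realised as { q in Q : 0 <= q < 1, denominator of q a power of p }
   with addition modulo 1.  An element of the direct sum is a family
   d : nat (prime index p) -> nat (copy index n) -> rat, with d p n in Z[p^oo],
   d p n = 0 for non-prime p, and only finitely many nonzero entries. *)
Local Open Scope ring_scope.

Definition in_pruefer (p : nat) (q : rat) : Prop :=
  0 <= q /\ q < 1 /\ exists k : nat, denq q = (p ^ k)%N%:Z.

Definition add_mod1 (a b : rat) : rat := if a + b < 1 then a + b else a + b - 1.

Definition in_sum_pruefer (d : nat -> nat -> rat) : Prop :=
  (forall p n, prime p -> in_pruefer p (d p n)) /\
  (forall p n, ~~ prime p -> d p n = 0) /\
  (exists N : nat, forall p n, (N <= p)%N \/ (N <= n)%N -> d p n = 0).

Definition add_sum_pruefer (d e : nat -> nat -> rat) : nat -> nat -> rat :=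
  fun p n => add_mod1 (d p n) (e p n).

Definition iso_sum_pruefer (A : table) : Prop :=
  exists phi : positive -> (nat -> nat -> rat),
    (forall x, in_sum_pruefer (phi x)) /\
    (forall x y, phi x = phi y -> x = y) /\
    (forall d, in_sum_pruefer d -> exists x, phi x = d) /\
    (forall x y, phi (A x y) = add_sum_pruefer (phi x) (phi y)).

(* Density of a set S of tables in a set T, for the product topology of
   discrete N: every basic open set of T (tables agreeing with some G in T on
   a finite set of positions) meets S. *)
Definition dense_in (S T : table -> Prop) : Prop :=
  forall G, T G -> forall F : list (positive * positive),
    exists H, S H /\ T H /\ forall i j, In (i, j) F -> H i j = G i j.

(* Main.v *)
Require Import Defs.
From Stdlib Require Import PArith List ClassicalEpsilon Classical FunctionalExtensionality.
From HB Require Import structures.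
From mathcomp Require Import all_boot all_order all_algebra ring.
Set Implicit Arguments. Unset Strict Implicit. Unset Printing Implicit Defensive.
Import Order.TTheory GRing.Theory Num.Theory.
Local Open Scope ring_scope.
Definition Zpd (p : nat) (x : rat) := exists k : nat, x * (p ^ k)%N%:R \is a Num.int.

Lemma Zpd_0 p : Zpd p 0.
Proof. by exists 0%N; rewrite mul0r. Qed.

Lemma ZpdD p x y : Zpd p x -> Zpd p y -> Zpd p (x + y).
Proof.
move=> [k1 h1] [k2 h2]; exists (k1 + k2)%N.
rewrite expnD natrM mulrDl mulrA (mulrC _ (p ^ k2)%:R) mulrA.
apply: rpredD; first by apply: rpredM => //; apply: rpred_nat.
by rewrite -mulrA (mulrC (p ^ k1)%:R) mulrA; apply: rpredM => //; apply: rpred_nat.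
Qed.

Lemma ZpdMz p x (z : int) : Zpd p x -> Zpd p (z%:~R * x).
Proof.
move=> [k h]; exists k; rewrite -mulrA; apply: rpredM => //; exact: rpred_int.
Qed.

Lemma Zpd_int p x : x \is a Num.int -> Zpd p x.
Proof. by move=> h; exists 0%N; rewrite expn0 mulr1. Qed.

Lemma Zpd_sum p k (F : 'I_k -> rat) : (forall i, Zpd p (F i)) -> Zpd p (\sum_i F i).
Proof.
move=> h; apply: (big_ind (Zpd p)); [exact: Zpd_0 | exact: ZpdD | by []].
Qed.
Lemma Zpd_div p x n : prime p -> Zpd p x -> (0 < n)%N ->
  exists c, Zpd p c /\ n%:R * c - x \is a Num.int.
Proof.
move=> pp [e hx] n0.
set A := Num.floor (x * (p ^ e)%N%:R).
have hA : A%:~R = x * (p ^ e)%N%:R by rewrite /A floorK.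
set b := logn p n; set m := (n`_p^')%N.
have hn : n = (p ^ b * m)%N by rewrite -p_part partnC.
have cop : coprime (p ^ e) m.
  apply: (pnat_coprime (pi := p)); last exact: part_pnat.
  by rewrite pnatX pnat_id.
have [u [v huv]] := Bezoutz (m%:Z) ((p ^ e)%N%:Z).
have g1 : gcdz (m%:Z) ((p ^ e)%N%:Z) = 1.
  by rewrite /gcdz /= gcdnC (eqP cop).
rewrite g1 in huv.
have Pn0 : (p ^ e)%N%:R != 0 :> rat by rewrite pnatr_eq0 -lt0n expn_gt0 prime_gt0.
have Qn0 : (p ^ b)%N%:R != 0 :> rat by rewrite pnatr_eq0 -lt0n expn_gt0 prime_gt0.
exists ((A * u)%:~R / ((p ^ e)%N%:R * (p ^ b)%N%:R)); split.
  exists (e + b)%N; rewrite expnD natrM mulfVK; first exact: rpred_int.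
  by rewrite mulf_neq0.
have huv' : u%:~R * m%:R + v%:~R * (p ^ e)%N%:R = 1 :> rat.
  by have := congr1 (fun z : int => z%:~R : rat) huv; rewrite /= intrD !intrM.
have -> : x = A%:~R / (p ^ e)%N%:R by rewrite hA mulfK.
have -> : n%:R * ((A * u)%:~R / ((p ^ e)%N%:R * (p ^ b)%N%:R)) - A%:~R / (p ^ e)%N%:R
   = - (v * A)%:~R :> rat.
  rewrite hn natrM !intrM.
  move: huv' Pn0 Qn0; set P := ((p ^ e)%N%:R : rat); set Q := ((p ^ b)%N%:R : rat).
  set a := (A%:~R : rat); set U := (u%:~R : rat); set V := (v%:~R : rat); set Mm := (m%:R : rat).
  move=> huv' Pn0 Qn0.
  have -> : Q * Mm * (a * U / (P * Q)) - a / P = a * (U * Mm - 1) / P.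
    by field; rewrite Pn0 Qn0.
  have -> : U * Mm - 1 = - (V * P) by rewrite -huv'; ring.
  by field.
by rewrite rpredN; apply: rpred_int.
Qed.

Lemma intD (x y : rat) : x \is a Num.int -> y \is a Num.int -> x + y \is a Num.int.
Proof. by move=> hx hy; rewrite rpredD. Qed.
Lemma intMz (x : rat) (z : int) : x \is a Num.int -> x *~ z \is a Num.int.
Proof. by move=> hx; rewrite rpredMz. Qed.

Section Core.
Variable M : zmodType.
Variable gs : nat -> M.

Definition comb k (a : nat -> int) : M := \sum_(i < k) gs i *~ a i.
Definition inK k (g : M) := exists a, g = comb k a.
Definition valid p k (c : nat -> rat) :=
  (forall i, (i < k)%N -> Zpd p (c i)) /\
  forall a, comb k a = 0 -> \sum_(i < k) c i *~ a i \is a Num.int.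

Lemma sumMzl (V : zmodType) k (F : 'I_k -> V) z :
  (\sum_i F i) *~ z = \sum_i F i *~ z.
Proof. by elim/big_rec2: _ => [|i x y _ <-]; rewrite ?mul0rz ?mulrzDl. Qed.

Lemma inK0 k : inK k 0.
Proof. by exists (fun _ => 0); rewrite /comb big1 // => i _; rewrite mulr0z. Qed.

Lemma combD k a b : comb k (fun i => a i + b i) = comb k a + comb k b.
Proof. by rewrite /comb -big_split; apply: eq_bigr => i _; rewrite mulrzDr. Qed.

Lemma combZ k a z : comb k (fun i => z * a i) = comb k a *~ z.
Proof. by rewrite /comb sumMzl; apply: eq_bigr => i _; rewrite mulrC mulrzA. Qed.

Lemma inKD k g h : inK k g -> inK k h -> inK k (g + h).
Proof. by move=> [a ->] [b ->]; exists (fun i => a i + b i); rewrite combD. Qed.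

Lemma inKZ k g z : inK k g -> inK k (g *~ z).
Proof. by move=> [a ->]; exists (fun i => z * a i); rewrite combZ. Qed.

Lemma inKN k g : inK k g -> inK k (- g).
Proof. by move=> h; rewrite -mulrN1z; apply: inKZ. Qed.

Definition decP (P : Prop) : bool :=
  if excluded_middle_informative P then true else false.
Lemma decPP P : reflect P (decP P).
Proof. by rewrite /decP; case: excluded_middle_informative => h; constructor. Qed.

Lemma ann k :
  (forall j : nat, (0 < j)%N -> ~ inK k (gs k *~ j%:Z)) \/
  exists n : nat, (0 < n)%N /\ inK k (gs k *~ n%:Z) /\
    forall z : int, inK k (gs k *~ z) -> (n%:Z %| z)%Z.
Proof.
case: (classic (exists j : nat, (0 < j)%N /\ inK k (gs k *~ j%:Z))) => [ex|nex]; last first.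
  by left=> j j0 hj; apply: nex; exists j.
right.
pose P j := decP ((0 < j)%N /\ inK k (gs k *~ j%:Z)).
have exP : exists j, P j by case: ex => j hj; exists j; apply/decPP.
case: (ex_minnP exP) => n /decPP [n0 hn] minn.
exists n; split => //; split => // z hz.
apply/dvdz_mod0P.
set r := (z %% n)%Z.
have r0 : (0 <= r)%R by apply: modz_ge0; rewrite eqz_nat -lt0n.
have rn : (r < n%:Z)%R by apply: ltz_pmod; rewrite ltz_nat.
have hr : inK k (gs k *~ r).
  have -> : r = z - (z %/ n)%Z * n%:Z by rewrite /r; apply/eqP; rewrite eq_sym subr_eq addrC -divz_eq.
  rewrite mulrzBr; apply: inKD => //; apply: inKN.
  by rewrite mulrC mulrzA; apply: inKZ.
case: (boolP (r == 0)) => [/eqP // | rne0].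
have rp : r = (`|r|%N)%:Z by rewrite gez0_abs.
have : (n <= `|r|)%N.
  apply: minn; apply/decPP; split; first by rewrite -ltz_nat -rp lt_def rne0.
  by rewrite -rp.
by rewrite -lez_nat -rp leNgt rn.
Qed.

Lemma lin_comb (V : zmodType) (f : nat -> V) k a b z :
  \sum_(i < k) f i *~ (a i + z * b i) =
  \sum_(i < k) f i *~ a i + (\sum_(i < k) f i *~ b i) *~ z.
Proof.
rewrite sumMzl -big_split; apply: eq_bigr => i _.
by rewrite mulrzDr mulrC mulrzA.
Qed.

Lemma comb_rec k a : comb k.+1 a = comb k a + gs k *~ a k.
Proof. by rewrite /comb big_ord_recr. Qed.

Lemma inK_abs k z : inK k (gs k *~ z) -> inK k (gs k *~ (`|z|%N)%:Z).
Proof.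
move=> h; rewrite abszE; case: (boolP (0 <= z)) => hz.
  by rewrite ger0_norm.
by rewrite ltr0_norm ?ltNge // mulrNz; apply: inKN.
Qed.

Lemma key k a : comb k.+1 a = 0 -> inK k (gs k *~ a k).
Proof.
rewrite comb_rec => h; have -> : gs k *~ a k = - comb k a.
  by apply/eqP; rewrite -addr_eq0 addrC h.
by apply: inKN; exists a.
Qed.

Lemma ext p k c : prime p -> valid p k c ->
  exists ck, Zpd p ck /\ valid p k.+1 (fun i => if i == k then ck else c i).
Proof.
move=> pp [hz hv].
have sumcc : forall ck (a : nat -> int), \sum_(i < k.+1) (if i == k :> nat then ck else c i) *~ a i
    = \sum_(i < k) c i *~ a i + ck *~ a k.
  move=> ck a; rewrite big_ord_recr /= eqxx; congr (_ + _).
  by apply: eq_bigr => i _; rewrite /= (ltn_eqF (ltn_ord i)).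
have Zcc : forall ck, Zpd p ck -> forall i, (i < k.+1)%N ->
    Zpd p (if i == k then ck else c i).
  move=> ck hck i; rewrite ltnS leq_eqVlt; case: eqP => // _ /= hi; exact: hz.
case: (ann k) => [nex | [n [n0 [[b hb] hdiv]]]].
  exists 0; split; first exact: Zpd_0.
  split; first exact: Zcc (Zpd_0 p).
  move=> a ha; rewrite sumcc mul0rz addr0; apply: hv.
  have ak0 : a k = 0.
    apply/eqP; apply: contraT => hne.
    exfalso; apply: (nex `|a k|%N); last exact: inK_abs (key ha).
    by rewrite absz_gt0.
  by move: ha; rewrite comb_rec ak0 mulr0z addr0.
set x := \sum_(i < k) c i *~ b i.
have Zx : Zpd p x.
  by apply: Zpd_sum => i; rewrite -mulrzl; apply: ZpdMz; apply: hz.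
have [ck [Zck hck]] := Zpd_div pp Zx n0.
exists ck; split => //; split; first exact: Zcc.
move=> a ha; rewrite sumcc.
have /dvdzP [q hq] := hdiv _ (key ha).
have ha' : comb k (fun i => a i + q * b i) = 0.
  rewrite /comb lin_comb -/(comb k a) -/(comb k b) -hb -mulrzA mulrC -hq.
  by rewrite -comb_rec.
have := hv _ ha'; rewrite lin_comb -/x => hint.
have -> : \sum_(i < k) c i *~ a i + ck *~ a k =
   (\sum_(i < k) c i *~ a i + x *~ q) + (n%:R * ck - x) *~ q.
  set S := \sum_(i < k) _; rewrite hq mulrzBl (mulrC q) mulrzA mulr_natl pmulrn addrA addrAC addrK.
  by [].
by apply: intD => //; apply: intMz.
Qed.

Lemma base : gs 0 != 0 ->
  exists p c, prime p /\ valid p 1 c /\ c 0%N \isn't a Num.int.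
Proof.
move=> g0.
have inK0E : forall g, inK 0 g -> g = 0 by move=> g [a ->]; rewrite /comb big_ord0.
suff [p [pp hp]] : exists p, prime p /\ forall z, gs 0 *~ z = 0 -> (p%:Z %| z)%Z.
  exists p, (fun _ => (p%:R)^-1); split => //; split.
    split.
      move=> i _; exists 1%N; rewrite expn1 mulVf; first exact: rpred1.
      by rewrite pnatr_eq0 -lt0n prime_gt0.
    move=> a; rewrite /comb !big_ord1 /= => /hp /dvdzP [q hq]; rewrite hq.
    rewrite -mulrzr intrM mulrC -mulrA (_ : (p%:Z)%:~R = p%:R) // mulfV ?mulr1; first exact: intr_int.
    by rewrite pnatr_eq0 -lt0n prime_gt0.
  rewrite Qint_def.
  have -> : (p%:R : rat) = (p%:Z)%:~R by [].
  rewrite denqVz; last by rewrite eqz_nat -lt0n prime_gt0.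
  by rewrite /= eqz_nat neq_ltn prime_gt1 ?orbT.
case: (ann 0) => [nex | [n [n0 [hn hdiv]]]].
  exists 2%N; split => // z hz.
  have : z = 0.
    apply/eqP; apply: contraT => hne; exfalso.
    apply: (nex `|z|%N); first by rewrite absz_gt0.
    by apply: inK_abs; rewrite hz; apply: inK0.
  by move ->; rewrite dvdz0.
have hn0 : gs 0 *~ n%:Z = 0 by apply: inK0E.
have n1 : (1 < n)%N.
  rewrite ltn_neqAle eq_sym n0 andbT; apply/eqP => n1.
  by move: hn0; rewrite n1 mulr1z => /eqP; rewrite (negbTE g0).
exists (pdiv n); split; first exact: pdiv_prime.
move=> z hz; apply: (@dvdz_trans n%:Z); first exact: pdiv_dvd.
by apply: hdiv; rewrite hz; apply: inK0.
Qed.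

Lemma core k : gs 0 != 0 ->
  exists p c, prime p /\ valid p k.+1 c /\ c 0%N \isn't a Num.int.
Proof.
move=> g0; elim: k => [|k [p [c [pp [hv hc]]]]]; first exact: base.
have [ck [_ hv']] := ext pp hv.
by exists p, (fun i => if i == k.+1 then ck else c i); split.
Qed.
End Core.

Definition dlt (j i : nat) : int := ((i == j) : nat)%:Z.

Lemma sum_delta (V : zmodType) (f : nat -> V) K j : (j < K)%N ->
  \sum_(i < K) f i *~ dlt j i = f j.
Proof.
move=> hj; rewrite (bigD1 (Ordinal hj)) //= /dlt eqxx mulr1z big1 ?addr0 //.
by move=> i; rewrite -val_eqE /= => /negbTE ->; rewrite mulr0z.
Qed.

Lemma sum_delta3 (V : zmodType) (f : nat -> V) K j1 j2 j3 (e : int) :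
  (j1 < K)%N -> (j2 < K)%N -> (j3 < K)%N ->
  \sum_(i < K) f i *~ (dlt j1 i - dlt j2 i + e * dlt j3 i) = f j1 - f j2 + f j3 *~ e.
Proof.
move=> h1 h2 h3.
rewrite (eq_bigr (fun i : 'I_K => (f i *~ dlt j1 i - f i *~ dlt j2 i) + (f i *~ dlt j3 i) *~ e)); last first.
  by move=> i _; rewrite mulrzDr mulrzBr (mulrC e) mulrzA.
by rewrite big_split /= sumrB -sumMzl !sum_delta.
Qed.

Lemma sep (M : zmodType) (S : seq M) (s t : M) : s != t ->
  exists p (chi : M -> rat), prime p /\
   (forall x, x \in S -> Zpd p (chi x)) /\
   (forall x y z, x \in S -> y \in S -> z \in S -> z = x + y ->
       chi z - chi x - chi y \is a Num.int) /\
   (s \in S -> t \in S -> chi s - chi t \isn't a Num.int).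
Proof.
move=> st.
pose gs := fun i => nth 0 ((s - t) :: S) i.
have g0 : gs 0%N != 0 by rewrite /gs /= subr_eq0.
have [p [c [pp [[hz hv] hc]]]] := core (size S) g0.
have gsx : forall x, x \in S -> gs (index x S).+1 = x.
  by move=> x hx; rewrite /gs /= nth_index.
have ltx : forall x, x \in S -> ((index x S).+1 < (size S).+1)%N.
  by move=> x hx; rewrite ltnS index_mem.
exists p, (fun x => c (index x S).+1); split => //; split.
  by move=> x hx; apply: hz; apply: ltx.
split.
  move=> x y z hx hy hz' hxyz.
  have := hv (fun i => dlt (index z S).+1 i - dlt (index x S).+1 i + (-1) * dlt (index y S).+1 i).
  have h0 : z - x + y *~ -1 = 0 by rewrite mulrN1z hxyz addrAC addrK subrr.
  by rewrite /comb !sum_delta3 ?ltx // !gsx // h0 => /(_ erefl); rewrite mulrN1z.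
move=> hs ht; apply/negP => hst.
have := hv (fun i => dlt 0 i - dlt (index s S).+1 i + 1 * dlt (index t S).+1 i).
have h0 : gs 0%N - s + t *~ 1 = 0 by rewrite mulr1z /gs /= addrAC subrK subrr.
rewrite /comb !sum_delta3 ?ltx // !gsx // h0 => /(_ erefl); rewrite mulr1z => h.
move/negP: hc; apply.
have -> : c 0%N = (c 0%N - c (index s S).+1 + c (index t S).+1) +
   (c (index s S).+1 - c (index t S).+1) by ring.
by apply: intD.
Qed.

Lemma pos_natK : cancel Pos.to_nat Pos.of_nat.
Proof. exact: Pos2Nat.id. Qed.
HB.instance Definition _ := Countable.copy positive (can_type pos_natK).

Record abtab := ABT { tab :> table; tabP : is_abelian_table tab }.
Definition car (G : abtab) : Type := positive.
HB.instance Definition _ G := Countable.on (car G).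
Definition cinv (G : abtab) (x : positive) : positive :=
  proj1_sig (constructive_indefinite_description _ (proj2 (proj2 (proj1 (tabP G))) x)).
Section Car.
Variable G : abtab.
Lemma caddA : associative (tab G : car G -> car G -> car G).
Proof. by move=> x y z; rewrite (proj1 (proj1 (tabP G))). Qed.
Lemma caddC : commutative (tab G : car G -> car G -> car G).
Proof. by move=> x y; rewrite (proj2 (tabP G)). Qed.
Lemma cadd0 : left_id (1%positive : car G) (tab G : car G -> car G -> car G).
Proof. by move=> x; case: (proj1 (proj2 (proj1 (tabP G))) x). Qed.
Lemma caddN : left_inverse (1%positive : car G) (cinv G : car G -> car G) (tab G : car G -> car G -> car G).
Proof.
move=> x; rewrite /cinv; case: constructive_indefinite_description => y [h1 h2] /=.
exact: h2.
Qed.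
End Car.
HB.instance Definition _ G := GRing.isZmodule.Build (car G) (@caddA G) (@caddC G) (@cadd0 G) (@caddN G).

Definition fr (x : rat) : rat := x - (Num.floor x)%:~R.

Lemma fr_ge0 x : 0 <= fr x.
Proof. by rewrite /fr subr_ge0 floor_le. Qed.

Lemma fr_lt1 x : fr x < 1.
Proof. rewrite /fr ltrBlDl; have := floorD1_gt x; rewrite intrD; exact. Qed.

Lemma fr_int x : x \is a Num.int -> fr x = 0.
Proof. by move=> h; rewrite /fr floorK // subrr. Qed.

Lemma fr_isint x : x - fr x \is a Num.int.
Proof. by rewrite /fr opprB addrC subrK intr_int. Qed.

Lemma fr_eq x y : x - y \is a Num.int -> fr x = fr y.
Proof.
move=> h; have -> : x = y + (x - y) by rewrite addrC subrK.
by rewrite /fr floorDrz // intrD (floorK h) opprD addrACA subrr addr0.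
Qed.

Lemma fr_id u : 0 <= u -> u < 1 -> fr u = u.
Proof.
move=> h0 h1; rewrite /fr (@floor_def _ u 0) ?subr0 //.
by rewrite h0 add0r.
Qed.

Lemma fr_add a b : add_mod1 (fr a) (fr b) = fr (a + b).
Proof.
have e : fr (a + b) = fr (fr a + fr b).
  apply: fr_eq.
  have -> : a + b - (fr a + fr b) = (a - fr a) + (b - fr b) by rewrite opprD addrACA.
  exact: intD (fr_isint a) (fr_isint b).
rewrite e /add_mod1; case: ifP => h.
  by rewrite (@fr_id (fr a + fr b)) // addr_ge0 // fr_ge0.
rewrite (@fr_eq (fr a + fr b) (fr a + fr b - 1)); last first.
  by rewrite opprB addrC subrK; exact: rpred1.
rewrite (@fr_id (fr a + fr b - 1)) //.
  by rewrite subr_ge0 leNgt h.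
by rewrite ltrBlDl ltrD ?fr_lt1.
Qed.

Lemma fr_neq x y : x - y \isn't a Num.int -> fr x <> fr y.
Proof.
move=> /negP h e; apply: h.
have -> : x - y = (x - fr x) - (y - fr y) by rewrite e; ring.
by rewrite rpredB // fr_isint.
Qed.

Lemma den_dvd (y : rat) (N : nat) : y * N%:R \is a Num.int -> (`|denq y| %| N)%N.
Proof.
move=> h.
have hm : (Num.floor (y * N%:R))%:~R = y * N%:R by rewrite floorK.
set m := Num.floor _ in hm.
have e : numq y * N%:Z = m * denq y.
  apply: (@intr_inj rat); rewrite !intrM numqE hm.
  by rewrite -mulrA (mulrC _ N%:R) mulrA.
have : (`|denq y| %| `|numq y| * N)%N.
  by rewrite -[N]/(`|N%:Z|%N) -abszM e abszM dvdn_mull.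
by rewrite Gauss_dvdr // coprime_sym coprime_num_den.
Qed.

Lemma fr_pruefer p x : prime p -> Zpd p x -> in_pruefer p (fr x).
Proof.
move=> pp hx.
have [k hk] : Zpd p (fr x).
  have -> : fr x = x + - (Num.floor x)%:~R by [].
  by apply: ZpdD => //; apply: Zpd_int; rewrite rpredN intr_int.
split; first exact: fr_ge0.
split; first exact: fr_lt1.
have /(dvdn_pfactor _ _ pp) [j _ hj] := den_dvd hk.
by exists j; rewrite -hj absz_denq.
Qed.

Definition sw (T : eqType) (b c w : T) : T :=
  if w == b then c else if w == c then b else w.

Lemma swK (T : eqType) (b c : T) : cancel (sw b c) (sw b c).
Proof.
move=> w; rewrite /sw.
case: (eqVneq w b) => [->|wb].
  by rewrite eqxx; case: (eqVneq c b) => [->|cb]; rewrite ?eqxx.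
case: (eqVneq w c) => [->|wc]; first by rewrite eqxx.
by rewrite (negbTE wb) (negbTE wc).
Qed.

Lemma extend_perm (s : seq positive) (tau : positive -> positive) :
  uniq s -> {in s &, injective tau} ->
  exists sg sgi, cancel sg sgi /\ cancel sgi sg /\ {in s, forall x, sg x = tau x}.
Proof.
elim: s => [|a s IH] /=.
  by move=> _ _; exists id, id.
move=> /andP [nas us] inj.
have [sg [sgi [c1 [c2 hs]]]] : exists sg sgi, cancel sg sgi /\ cancel sgi sg /\ {in s, forall x, sg x = tau x}.
  by apply: IH => // x y hx hy; apply: inj; rewrite inE ?hx ?hy orbT.
exists (fun x => sw (sg a) (tau a) (sg x)), (fun x => sgi (sw (sg a) (tau a) x)).
split; first by move=> x /=; rewrite swK c1.
split; first by move=> x /=; rewrite c2 swK.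
move=> x; rewrite inE => /orP [/eqP ->|xs].
  by rewrite /sw eqxx.
rewrite (hs x xs) /sw.
have xa : x != a by apply: contraNneq nas => <-.
case: eqP => [e|_].
  exfalso; move/negP: xa; apply; apply/eqP.
  by rewrite -(c1 x) -(c1 a) hs // e.
case: eqP => [e|//].
exfalso; move/negP: xa; apply; apply/eqP.
by apply: inj; rewrite ?inE ?xs ?eqxx ?orbT.
Qed.

Lemma transport_group (A : table) sg sgi :
  cancel sg sgi -> cancel sgi sg -> is_group_table A -> sg 1%positive = 1%positive ->
  is_group_table (fun x y => sgi (A (sg x) (sg y))).
Proof.
move=> c1 c2 [hA [h1 hi]] s1; split; [|split].
- by move=> x y z; rewrite !c2 hA.
- by move=> x; rewrite s1 (proj1 (h1 _)) (proj2 (h1 _)) c1.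
- move=> x; have [y [e1 e2]] := hi (sg x).
  by exists (sgi y); rewrite c2 e1 e2 -s1 c1.
Qed.

Lemma In_mem (T : eqType) (x : T) (s : seq T) : List.In x s -> x \in s.
Proof.
elim: s => //= a s IH [->|h]; rewrite inE; first by rewrite eqxx.
by rewrite IH ?orbT.
Qed.

From mathcomp Require Import lra zify.

Lemma phi1 (A : table) (phi : positive -> nat -> nat -> rat) : is_group_table A ->
  (forall x, in_sum_pruefer (phi x)) ->
  (forall x y, phi (A x y) = add_sum_pruefer (phi x) (phi y)) ->
  phi 1%positive = (fun _ _ => 0).
Proof.
move=> [_ [h1 _]] hD hH.
have e := hH 1%positive 1%positive; rewrite (proj1 (h1 _)) in e.
apply: functional_extensionality => q; apply: functional_extensionality => n.
have := congr1 (fun d => d q n) e; rewrite /add_sum_pruefer /add_mod1 /=.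
set a := phi 1%positive q n.
have [ha0 ha1] : 0 <= a /\ a < 1.
  case: (boolP (prime q)) => pq.
    by have [h0 [h1' _]] := (proj1 (hD 1%positive)) q n pq.
  by rewrite /a (proj1 (proj2 (hD 1%positive)) q n pq).
case: ifP => _ h.
  by apply: (addrI a); rewrite addr0 -h.
clear e hH hD h1; exfalso; lra.
Qed.

Theorem proposition8p6 (A : table) :
  is_group_table A -> iso_sum_pruefer A ->
  dense_in (fun G => is_group_table G /\ table_iso G A)
           (fun G => is_group_table G /\ is_abelian_table G).
Proof.
move=> grpA [phi [phiD [phiI [phiS phiH]]]] G [grpG abG] F.
pose GG := ABT abG.
pose S : seq positive := 1%positive :: flatten [seq [:: x.1; x.2; G x.1 x.2] | x <- F].
have S1 : 1%positive \in S by rewrite inE eqxx.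
have memF : forall i j, List.In (i, j) F -> [/\ i \in S, j \in S & G i j \in S].
  move=> i j /In_mem hij.
  have hsub : forall w, w \in [:: i; j; G i j] -> w \in S.
    move=> w hw; rewrite inE; apply/orP; right; apply/flattenP.
    exists [:: i; j; G i j] => //.
    by apply/mapP; exists (i, j).
  by split; apply: hsub; rewrite !inE eqxx ?orbT.
have G11 : G 1%positive 1%positive = 1%positive := proj1 (proj1 (proj2 grpG) _).
have hsep : forall s t : positive, exists pc : nat * (positive -> rat),
   [/\ prime pc.1, (forall x, x \in S -> Zpd pc.1 (pc.2 x)),
       (forall x y z, x \in S -> y \in S -> z \in S -> z = G x y ->
           pc.2 z - pc.2 x - pc.2 y \is a Num.int) &
       (s != t -> s \in S -> t \in S -> pc.2 s - pc.2 t \isn't a Num.int)].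
  move=> s t; case: (eqVneq s t) => [->|st].
    exists (2%N, fun _ => 0); split.
    - by [].
    - by move=> x _; exact: Zpd_0.
    - by move=> x y z _ _ _ _ /=; rewrite !subr0; exact: rpred0.
    - by [].
  have [p [chi [pp [hz [hr hs]]]]] := @sep (car GG) S s t st.
  by exists (p, chi); split.
pose pc s t := proj1_sig (constructive_indefinite_description _ (hsep s t)).
have pcP : forall s t, [/\ prime (pc s t).1, (forall x, x \in S -> Zpd (pc s t).1 ((pc s t).2 x)),
       (forall x y z, x \in S -> y \in S -> z \in S -> z = G x y ->
           (pc s t).2 z - (pc s t).2 x - (pc s t).2 y \is a Num.int) &
       (s != t -> s \in S -> t \in S -> (pc s t).2 s - (pc s t).2 t \isn't a Num.int)].
  by move=> s t; rewrite /pc; case: constructive_indefinite_description.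
pose m := size S.
have m0 : (0 < m)%N by rewrite /m /= ltnS.
pose sn n := nth 1%positive S (n %/ m).
pose tn n := nth 1%positive S (n %% m).
pose pr n := (pc (sn n) (tn n)).1.
pose ch n := (pc (sn n) (tn n)).2.
pose psi x : nat -> nat -> rat :=
  fun q n => if (n < m * m)%N && (q == pr n) then fr (ch n x) else 0.
have psiD : forall x, x \in S -> in_sum_pruefer (psi x).
  move=> x hx; split; [|split].
  - move=> q n pq; rewrite /psi; case: ifP => [/andP [_ /eqP ->]|_].
      case: (pcP (sn n) (tn n)) => pp hz _ _.
      by apply: fr_pruefer => //; apply: hz.
    by split => //; split => //; exists 0%N.
  - move=> q n npq; rewrite /psi; case: ifP => // /andP [_ /eqP e]; exfalso.
    move/negP: npq; apply; rewrite e; by case: (pcP (sn n) (tn n)).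
  - exists (m * m + \max_(i < m * m) pr i).+1 => q n hqn; rewrite /psi.
    case: ifP => // /andP [hn /eqP e]; exfalso.
    have hb : (pr n <= \max_(i < m * m) pr i)%N
      := @leq_bigmax _ (fun i : 'I_(m * m) => pr i) (Ordinal hn).
    by case: hqn; rewrite ?e; lia.
have psiH : forall i j, List.In (i, j) F -> psi (G i j) = add_sum_pruefer (psi i) (psi j).
  move=> i j hij; have [hi hj hg] := memF i j hij.
  apply: functional_extensionality => q; apply: functional_extensionality => n.
  rewrite /add_sum_pruefer /psi; case: ifP => _; last by rewrite /add_mod1 addr0 ltr01.
  rewrite fr_add; apply: fr_eq; rewrite opprD addrA.
  by case: (pcP (sn n) (tn n)) => _ _ hr _; apply: hr.
have psi1 : psi 1%positive = (fun _ _ => 0).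
  apply: functional_extensionality => q; apply: functional_extensionality => n.
  rewrite /psi; case: ifP => // _; apply: fr_int.
  case: (pcP (sn n) (tn n)) => _ _ hr _.
  have := hr _ _ _ S1 S1 S1 (esym G11).
  by rewrite subrr add0r rpredN.
have psiI : forall s t, s \in S -> t \in S -> psi s = psi t -> s = t.
  move=> s t hs ht e; apply/eqP; apply: contraT => st.
  have his : (index s S < m)%N by rewrite index_mem.
  have hit : (index t S < m)%N by rewrite index_mem.
  pose n := (index s S * m + index t S)%N.
  have hn : (n < m * m)%N by rewrite /n; nia.
  have hsn : sn n = s by rewrite /sn /n divnMDl // divn_small // addn0 nth_index.
  have htn : tn n = t by rewrite /tn /n modnMDl modn_small // nth_index.
  have := congr1 (fun d => d (pr n) n) e; rewrite /psi hn eqxx /=.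
  move=> h; exfalso; move: h; apply: fr_neq; rewrite /ch hsn htn.
  by case: (pcP s t) => _ _ _ h; apply: h.
have hpre : forall x, exists y, x \in S -> phi y = psi x.
  move=> x; case: (boolP (x \in S)) => hx.
    by have [y hy] := phiS _ (psiD x hx); exists y.
  by exists 1%positive.
pose tau x := proj1_sig (constructive_indefinite_description _ (hpre x)).
have tauP : forall x, x \in S -> phi (tau x) = psi x.
  by move=> x; rewrite /tau; case: constructive_indefinite_description.
have tauI : {in undup S &, injective tau}.
  move=> x y; rewrite !mem_undup => hx hy e; apply: psiI => //.
  by rewrite -!tauP // e.
have [sg [sgi [c1 [c2 hsg]]]] := extend_perm (undup_uniq S) tauI.
have hsg' : forall x, x \in S -> sg x = tau x.
  by move=> x hx; apply: hsg; rewrite mem_undup.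
have p1 := phi1 grpA phiD phiH.
have tau1 : tau 1%positive = 1%positive by apply: phiI; rewrite tauP // psi1 p1.
have sg1 : sg 1%positive = 1%positive by rewrite hsg' ?tau1.
have Aab : forall x y, A x y = A y x.
  move=> x y; apply: phiI; rewrite !phiH /add_sum_pruefer.
  apply: functional_extensionality => q; apply: functional_extensionality => n.
  by rewrite /add_mod1 addrC.
pose H := fun x y => sgi (A (sg x) (sg y)).
have grpH : is_group_table H := transport_group c1 c2 grpA sg1.
exists H; split; [split => //|split; [split => // | ]].
- exists sg; split; first exact: (Bijective c1 c2).
  by move=> x y; rewrite /H c2.
- by split => // x y; rewrite /H Aab.
- move=> i j hij; have [hi hj hg] := memF i j hij.
  rewrite /H !hsg' //.
  have -> : A (tau i) (tau j) = tau (G i j).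
    by apply: phiI; rewrite phiH !tauP // psiH.
  by rewrite -hsg' // c1.
Qed.
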